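(* Let $A=\{a_1<\cdots<a_N\}$ be a finite set of real numbers, with $N$ sufficiently large (larger than some absolute constant). Then there exist a nonempty set $H'\subseteq H(A)$ of size $m$ and a positive integer $L$ such that (i) $Lm\geq N/(3\log_2N)$; (ii) $|A+A-A| \geq Lm^2/2$; (iii) for each $h\in H'$, $L\leq |A_h|\leq 2L$.
   Context: For $A=\{a_1<\cdots<a_N\}\subset\mathbb{R}$, $H(A)=\{a_{j+1}-a_j:j=1,\ldots,N-1\}$ is the set of consecutive differences of $A$, and for $h\in H(A)$, $A_h=\{a_i\in A: a_{i+1}-a_i=h\}$. $A+A-A=\{a+b-c:a,b,c\in A\}$. *)

(* Defs.v *)
From HB Require Import structures.
From mathcomp Require Import all_boot all_order all_algebra.
From mathcomp Require Import reals exp.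
Set Implicit Arguments. Unset Strict Implicit. Unset Printing Implicit Defensive.
Import Order.TTheory GRing.Theory Num.Theory.
Local Open Scope ring_scope.

Section Defs.
Variable R : realType.

(* a_1 < ... < a_N : the elements of A listed increasingly (0-indexed here) *)
Definition sortedA (A : seq R) : seq R := sort <=%R A.

Definition consec_diffs (A : seq R) : seq R :=
  let s := sortedA A in
  [seq nth 0 s i.+1 - nth 0 s i | i <- iota 0 (size s).-1].

Definition HA (A : seq R) : seq R := undup (consec_diffs A).

Definition A_h (A : seq R) (h : R) : seq R :=
  let s := sortedA A in
  [seq nth 0 s i | i <- iota 0 (size s).-1 & nth 0 s i.+1 - nth 0 s i == h].

Definition AApmA (A : seq R) : seq R :=
  undup [seq x - c | x <- [seq a + b | a <- A, b <- A], c <- A].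

End Defs.

(* Main.v *)
Require Import Defs.
From HB Require Import structures.
From mathcomp Require Import all_boot all_order all_algebra.
From mathcomp Require Import reals exp.
From mathcomp Require Import zify.
Import Order.TTheory GRing.Theory Num.Theory.
Local Open Scope ring_scope.

Section Aux.
Variable R : realType.
Variable A : seq R.
Hypothesis uA : uniq A.

Local Notation s := (sortedA A).
Local Notation N := (size A).
Definition dd (i : nat) : R := nth 0 s i.+1 - nth 0 s i.
Definition rr := iota 0 N.-1.
Definition cnt (h : R) : nat := count (fun i => dd i == h) rr.

Lemma size_s : size s = N.
Proof. by rewrite /sortedA size_sort. Qed.

Lemma s_lt i j : (i < j)%N -> (j < N)%N -> nth 0 s i < nth 0 s j.
Proof.
move=> ij jN.
have st : sorted <%R s by rewrite /sortedA sort_lt_sorted.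
apply: (sorted_ltn_nth lt_trans) => //; rewrite inE size_s //.
exact: ltn_trans jN.
Qed.

Lemma s_le i j : (i <= j)%N -> (j < N)%N -> nth 0 s i <= nth 0 s j.
Proof.
rewrite leq_eqVlt => /orP[/eqP-> //|ij] jN; exact/ltW/s_lt.
Qed.

Lemma dd_gt0 i : (i < N.-1)%N -> 0 < dd i.
Proof. move=> iN; rewrite /dd subr_gt0; apply: s_lt => //; lia. Qed.

Lemma s_in i : (i < N)%N -> nth 0 s i \in A.
Proof. by move=> iN; rewrite -(mem_sort <=%R) -/(sortedA A) mem_nth // size_s. Qed.

Lemma HAE : HA A = undup (map dd rr).
Proof. by rewrite /HA /consec_diffs size_s. Qed.

Lemma HA_dd h : h \in HA A -> exists2 i, (i < N.-1)%N & h = dd i.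
Proof.
rewrite HAE mem_undup => /mapP[i]; rewrite mem_iota add0n => /andP[_ iN] ->.
by exists i.
Qed.

Lemma HA_gt0 h : h \in HA A -> 0 < h.
Proof. by case/HA_dd=> i iN ->; apply: dd_gt0. Qed.

Lemma size_Ah h : size (A_h A h) = cnt h.
Proof. by rewrite /A_h size_map size_filter size_s. Qed.

Lemma cnt_gt0 h : h \in HA A -> (0 < cnt h)%N.
Proof.
case/HA_dd=> i iN ->; rewrite /cnt -has_count; apply/hasP; exists i => //.
by rewrite mem_iota add0n.
Qed.

Lemma cnt_le h : (cnt h <= N.-1)%N.
Proof. by rewrite /cnt (leq_trans (count_size _ _)) // size_iota. Qed.

Lemma sum_pick (T : eqType) (H : seq T) x (F : T -> nat) : uniq H ->
  (\sum_(h <- H) (x == h) * F h = (x \in H) * F x)%N.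
Proof.
elim: H => [|h H IH]; first by rewrite big_nil.
rewrite /= big_cons in_cons => /andP[hH uH]; rewrite IH //.
case: (eqVneq x h) => [->|]; last by rewrite mul0n.
by rewrite (negbTE hH) /= addn0 mul1n.
Qed.

Lemma sum_cnt : (\sum_(h <- HA A) cnt h = N.-1)%N.
Proof.
have : (\sum_(h <- HA A) cnt h = count (fun i => dd i \in HA A) rr)%N.
  rewrite /cnt; move: (undup_uniq (map dd rr)); rewrite -HAE.
  elim: rr => [|i r IH] uH.
    by rewrite big1 // => h _.
  rewrite /= big_split /= IH // ; have := (@sum_pick _ _ (dd i) (fun=> 1%N) uH); rewrite muln1 => <-; congr (_ + _)%N;
     by apply: eq_bigr => h _; rewrite muln1.
move=> ->; rewrite (eq_in_count (a2 := predT)) ?count_predT ?size_iota //.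
by move=> i ir; rewrite HAE mem_undup map_f.
Qed.

Lemma count_sum (T : Type) (P : pred T) (l : seq T) :
  count P l = (\sum_(x <- l) (P x : nat))%N.
Proof. by elim: l => [|x l IH]; rewrite ?big_nil ?big_cons //= IH. Qed.

Lemma key_sep i j h1 h2 : (i < j)%N -> (j < N.-1)%N -> 0 < h1 <= dd i -> 0 < h2 ->
  nth 0 s i + h1 != nth 0 s j + h2.
Proof.
move=> ij jN /andP[h10 h1d] h20.
suff H : nth 0 s i + h1 < nth 0 s j + h2 by rewrite lt_eqF.
apply: (le_lt_trans (y := nth 0 s i.+1)).
  by move: h1d; rewrite /dd lerBrDl addrC.
apply: (le_lt_trans (y := nth 0 s j)); first by apply: s_le => //; lia.
by rewrite ltrDl.
Qed.

Lemma lower_bound (H' : seq R) (L : nat) : uniq H' -> {subset H' <= HA A} ->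
  (forall h, h \in H' -> L <= cnt h)%N ->
  (L * size H' ^ 2 <= 2 * size (AApmA A))%N.
Proof.
move=> uH sH Lc.
pose P := [seq (i, h) | i <- rr, h <- H'].
pose cond := fun p : nat * R => (dd p.1 \in H') && (p.2 <= dd p.1).
pose T := [seq nth 0 s p.1 + p.2 | p <- P & cond p].
have uT : uniq T.
  rewrite /T map_inj_in_uniq; last first.
    move=> [i h1] [j h2]; rewrite !mem_filter /cond /= => /andP[/andP[_ h1d] p1]
      /andP[/andP[_ h2d] p2] eq12.
    move/allpairsP: p1 => [[i' h1'] [/= ir h1H [e1 e2]]]; subst i' h1'.
    move/allpairsP: p2 => [[j' h2'] [/= jr h2H [e1 e2]]]; subst j' h2'.
    move: ir jr; rewrite !mem_iota !add0n => /andP[_ iN] /andP[_ jN].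
    have g1 := HA_gt0 _ (sH _ h1H); have g2 := HA_gt0 _ (sH _ h2H).
    case: (ltngtP i j) => [ij|ji|eij].
    - by move: (key_sep _ _ h1 h2 ij jN); rewrite g1 h1d g2 eq12 eqxx => /(_ isT isT).
    - by move: (key_sep _ _ h2 h1 ji iN); rewrite g2 h2d g1 -eq12 eqxx => /(_ isT isT).
    - by move: eq12; rewrite eij => /addrI ->.
  apply: filter_uniq; apply: allpairs_uniq => //; first exact: iota_uniq.
  by move=> [? ?] [? ?] _ _.
have sT : {subset T <= AApmA A}.
  move=> x /mapP[[i h]]; rewrite mem_filter => /andP[_ /allpairsP[[i' h'] [/= ir hH [] -> ->]]] -> /=.
  case/HA_dd: (sH _ hH) => j jN ->.
  move: ir; rewrite mem_iota add0n => /andP[_ iN].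
  rewrite /AApmA mem_undup.
  have -> : nth 0 s i' + dd j = (nth 0 s i' + nth 0 s j.+1) - nth 0 s j.
    by rewrite /dd addrA.
  apply/allpairsP; exists (nth 0 s i' + nth 0 s j.+1, nth 0 s j); split => //=;
    last by apply: s_in; lia.
  by apply/allpairsP; exists (nth 0 s i', nth 0 s j.+1); split => //; apply: s_in; lia.
have le1 := uniq_leq_size uT sT.
pose c (x : R) := (\sum_(h' <- H') ((h' <= x)%R : nat))%N.
have sizeT : size T = (\sum_(h <- H') cnt h * c h)%N.
  rewrite /T size_map size_filter /P count_flatten -map_comp sumnE big_map.
  transitivity (\sum_(i <- rr) \sum_(h <- H') (dd i == h) * c h)%N.
    apply: eq_bigr => i _ /=; rewrite sum_pick // count_map.
    case: (boolP (dd i \in H')) => hi /=.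
      rewrite mul1n /c count_sum; apply: eq_bigr => h _ /=. by rewrite /cond /= hi.
    rewrite mul0n -(count_pred0 H'); apply: eq_count => h; by rewrite /= /cond /= (negbTE hi).
  rewrite exchange_big /=; apply: eq_bigr => h _.
  by rewrite -big_distrl /= /cnt count_sum.
have sumc : (size H' * size H' <= 2 * \sum_(h <- H') c h)%N.
  have ex : (\sum_(h <- H') c h =
     \sum_(h <- H') \sum_(h' <- H') ((h <= h')%R : nat))%N.
    by rewrite /c exchange_big.
  rewrite mul2n -addnn {2}ex /c -big_split /=.
  rewrite -sum1_size big_distrl /= leq_sum // => h _.
  rewrite mul1n -big_split /= leq_sum // => h' _.
  by case: (leP h' h) => // /ltW ->.
apply: (@leq_trans (2 * size T)); last by rewrite leq_mul2l le1 orbT.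
rewrite sizeT expnS expn1.
apply: (leq_trans (leq_mul (leqnn L) sumc)).
rewrite mulnCA leq_mul2l /= big_distrr /= !big_seq leq_sum // => h hH.
by rewrite leq_mul2r (Lc _ hH) orbT.
Qed.

End Aux.
Arguments dd {R} A i.
Arguments cnt {R} A h.
Arguments sum_cnt {R} A.
Arguments cnt_le {R} A h.
Arguments cnt_gt0 {R} A h.
Arguments size_Ah {R} A h.
Arguments lower_bound {R} A uA H' L.

Lemma nat_fact N t X : (16 <= N)%N -> (3 <= t)%N -> (N.-1 <= X * 2 * t.+1)%N ->
  (N <= 3 * t * X)%N.
Proof. move=> *; nia. Qed.

Theorem lemma6 :
  exists N0 : nat, forall (R : realType) (A : seq R),
    uniq A -> (N0 <= size A)%N ->
    exists (H' : seq R) (L : nat),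
      [/\ uniq H', H' != [::], {subset H' <= HA A} & (0 < L)%N] /\
      [/\ (size A)%:R / (3 * (ln ((size A)%:R : R) / ln 2)) <= ((L * size H')%N)%:R :> R,
        ((L * (size H') ^ 2)%N)%:R / 2 <= ((size (AApmA A))%:R : R) &
        forall h, h \in H' -> (L <= size (A_h A h) <= 2 * L)%N].
Proof.
exists 16%N => R A uA hN.
set N := size A.
set t := trunc_log 2 N.-1.
have N1 : (0 < N.-1)%N by rewrite /N; lia.
have /andP[tlo thi] := trunc_log_bounds (isT : (1 < 2)%N) N1.
rewrite -/t in tlo thi.
pose S k := (\sum_(h <- HA A | trunc_log 2 (cnt A h) == k) cnt A h)%N.
have sumS : (\sum_(k < t.+1) S k = N.-1)%N.
  rewrite -(sum_cnt A).
  transitivity (\sum_(k < t.+1) \sum_(h <- HA A)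
     (if trunc_log 2 (cnt A h) == k then cnt A h else 0))%N.
    by apply: eq_bigr => k _; rewrite /S big_mkcond.
  rewrite exchange_big /=; apply: eq_bigr => h _.
  rewrite -big_mkcond /=.
  rewrite (eq_bigl (fun k : 'I_t.+1 => (k == trunc_log 2 (cnt A h) :> nat))); last first.
    by move=> k /=; rewrite eq_sym.
  rewrite (big_ord1_eq _ (fun _ => cnt A h)) ltnS leq_trunc_log //; exact: cnt_le.
have [k [kK hk]] : exists k, (k < t.+1)%N /\ (N.-1 <= S k * t.+1)%N.
  case: (boolP [exists k : 'I_t.+1, (N.-1 <= S k * t.+1)%N]).
    by case/existsP => k hk; exists k.
  move/existsPn => hall; exfalso.
  have : (\sum_(k < t.+1) S k * t.+1 <= \sum_(k < t.+1) (N.-1).-1)%N.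
    by apply: leq_sum => k _; move: (hall k); rewrite -ltnNge; lia.
  rewrite -big_distrl /= sumS big_const_ord iter_addn_0.
  have : (0 < N.-1)%N := N1.
  nia.
pose H' := [seq h <- HA A | trunc_log 2 (cnt A h) == k].
pose L := (2 ^ k)%N.
have sk : S k = (\sum_(h <- H') cnt A h)%N by rewrite /S big_filter.
have bnd h : h \in H' -> (2 ^ k <= cnt A h < 2 ^ k.+1)%N.
  rewrite mem_filter => /andP[/eqP <- hH].
  exact: (trunc_log_bounds (isT : (1 < 2)%N) (cnt_gt0 A h hH)).
have Sle : (S k <= size H' * (2 * L))%N.
  rewrite sk; apply: (@leq_trans (\sum_(h <- H') (2 * L))%N).
    rewrite big_seq [X in (_ <= X)%N]big_seq leq_sum // => h hH.
    by have /andP[_ ] := bnd h hH; rewrite expnS => /ltnW.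
  by rewrite -sum1_size big_distrl /=; apply/eq_leq/eq_bigr => h _; rewrite mul1n.
have uH' : uniq H' by apply: filter_uniq; apply: undup_uniq.
have sH' : {subset H' <= HA A} by move=> h; rewrite mem_filter => /andP[].
have mpos : H' != [::].
  apply/eqP => H0; move: hk Sle; rewrite H0 /= mul0n; lia.
have Lc : forall h, h \in H' -> (L <= cnt A h)%N by move=> h /bnd /andP[].
exists H', L; split; first by split => //; rewrite expn_gt0.
split.
- have t3 : (3 <= t)%N.
    move: thi hN; rewrite -/N; case: (t) => [|[|[|t']]] //=; lia.
  have nf : (N <= 3 * t * (L * size H'))%N.
    apply: nat_fact => //.
    apply: (leq_trans hk); rewrite leq_mul2r; apply/orP; right.
    by apply: (leq_trans Sle); nia.
  have Npos : (0 : R) < N%:R by rewrite ltr0n; lia.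
  have ln2 : (0 : R) < ln 2 by apply: ln_gt0; rewrite ltr1n.
  have hx : (t%:R : R) <= ln (N%:R : R) / ln 2.
    rewrite ler_pdivlMr // mulrC mulr_natr -lnXn ?ltr0n //.
    have -> : (2 : R) ^+ t = (2 ^ t)%:R by rewrite natrX.
    rewrite ler_ln ?posrE ?ltr0n ?expn_gt0 //; last by rewrite /N; lia.
    by rewrite ler_nat; apply: (leq_trans tlo); rewrite leq_pred.
  have xpos : (0 : R) < 3 * (ln (N%:R : R) / ln 2).
    apply: mulr_gt0 => //; apply: lt_le_trans hx; rewrite ltr0n; lia.
  rewrite ler_pdivrMr //.
  apply: (le_trans (y := ((L * size H')%N)%:R * (3 * t%:R))).
    by rewrite -natrM -natrM ler_nat mulnC.
  by rewrite ler_wpM2l ?ler0n // ler_wpM2l.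
- rewrite ler_pdivrMr // -natrM ler_nat mulnC.
  rewrite mulnC [X in (_ <= X)%N]mulnC; exact: lower_bound.
- move=> h hH; rewrite size_Ah; have /andP[l1 l2] := bnd h hH.
  by rewrite l1 /= -/L; move: l2; rewrite expnS mul2n -addnn; lia.
Qed.
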